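(* Let $p,q$ be coprime positive integers with $p\le q$ and $m$ a positive integer. Let $S=\mathbb C[X_0,\dots,X_4]/(X_0^{q-p}-X_1X_4+X_2X_3)$, graded by $\mathbb Z\times\mathbb Z/m\mathbb Z$ with $X_0$ of degree $(1,0)$, $X_1,X_2$ of degree $(-p,-1)$ and $X_3,X_4$ of degree $(q,1)$, and let $S^{G}=S_{(0,0)}$ be its degree-$(0,0)$ subring. Then (i) $S_{(-p,-1)}=S^{G}X_1+S^{G}X_2$; (ii) $S_{(q,1)}=S^{G}X_3+S^{G}X_4$.
   Context: The grading is the weight grading for the action of $G=G_0\times G_m$ on $\mathbb C^5$ given by $t\cdot(x_0,\dots,x_4)=(tx_0,t^{-p}x_1,t^{-p}x_2,t^qx_3,t^qx_4)$ for $t\in\mathbb C^*$ and $\zeta\cdot(x_0,\dots,x_4)=(x_0,\zeta^{-1}x_1,\zeta^{-1}x_2,\zeta x_3,\zeta x_4)$ for $\zeta\in\mu_m$; $S_{(0,0)}$ is the invariant ring $S^{G}$. *)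

(* Defs.v *)
From HB Require Import structures.
From mathcomp Require Import all_boot all_order all_algebra all_field.
From mathcomp Require Import mpoly.
Set Implicit Arguments. Unset Strict Implicit. Unset Printing Implicit Defensive.
Import Order.TTheory GRing.Theory Num.Theory.
Local Open Scope ring_scope.

(* The ambient polynomial ring C[X_0,...,X_4]; C is modelled by algC. *)
Definition R5 := {mpoly algC[5]}.

Definition X0 : R5 := 'X_(inord 0).
Definition X1 : R5 := 'X_(inord 1).
Definition X2 : R5 := 'X_(inord 2).
Definition X3 : R5 := 'X_(inord 3).
Definition X4 : R5 := 'X_(inord 4).

Definition frel (p q : nat) : R5 := X0 ^+ (q - p) - X1 * X4 + X2 * X3.

Definition wZ (p q : nat) (mo : 'X_{1..5}) : int :=
  (mo (inord 0))%:Z - (p * (mo (inord 1) + mo (inord 2)))%:Z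
  + (q * (mo (inord 3) + mo (inord 4)))%:Z.

Definition wM (mo : 'X_{1..5}) : int :=
  (mo (inord 3) + mo (inord 4))%:Z - (mo (inord 1) + mo (inord 2))%:Z.

Definition homdeg (p q m : nat) (a b : int) (P : R5) : Prop :=
  forall mo, mo \in msupp P ->
    wZ p q mo = a /\ (wM mo = b %[mod m%:Z])%Z.

Definition in_ideal (p q : nat) (P : R5) : Prop :=
  exists h : R5, P = h * frel p q.

(* Since f is homogeneous, S = R5/(f) is Z x Z/mZ-graded and its
   homogeneous component S_(a,b) is the image of the homogeneous component
   R5_(a,b).  We describe S_(a,b) through representatives: a polynomial P
   represents an element of S_(a,b) iff P is congruent mod (f) to a
   homogeneous polynomial of degree (a,b). *)
Definition inS (p q m : nat) (a b : int) (P : R5) : Prop :=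
  exists Q : R5, homdeg p q m a b Q /\ in_ideal p q (P - Q).

Definition in_SG_span (p q m : nat) (Y1 Y2 P : R5) : Prop :=
  exists g1 g2 : R5, inS p q m 0 0 g1 /\ inS p q m 0 0 g2 /\
    in_ideal p q (P - (g1 * Y1 + g2 * Y2)).

(* Main.v *)
Require Import Defs.
From HB Require Import structures.
From mathcomp Require Import all_boot all_order all_algebra all_field.
From mathcomp Require Import mpoly.
From mathcomp Require Import zify ring.
Import GRing.Theory Num.Theory.
Local Open Scope ring_scope.

Lemma ieq (i j : nat) : (i < 5)%N -> (j < 5)%N ->
  ((inord i : 'I_5) == inord j) = (i == j).
Proof. by move=> hi hj; rewrite -val_eqE /= !inordK. Qed.

Lemma wZD p q m1 m2 : wZ p q (m1 + m2)%MM = wZ p q m1 + wZ p q m2.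
Proof. rewrite /wZ !mnmDE. lia. Qed.
Lemma wMD m1 m2 : wM (m1 + m2)%MM = wM m1 + wM m2.
Proof. rewrite /wM !mnmDE. lia. Qed.

Lemma mfact (mo : 'X_{1..5}) i k : (k <= mo i)%N ->
  exists mo', mo = (mo' + U_(i) *+ k)%MM.
Proof.
move=> h; exists (mo - U_(i) *+ k)%MM; rewrite submK //.
apply/mnm_lepP => j; rewrite mulmnE mnm1E; case: eqP => [<-|] //.
by rewrite mul1n.
Qed.

Lemma mfact1 (mo : 'X_{1..5}) i : (0 < mo i)%N ->
  exists mo', mo = (mo' + U_(i))%MM.
Proof.
move=> h; have [mo' ->] := mfact _ _ 1 h; exists mo'.
by congr (_ + _)%MM; apply/mnmP => j; rewrite mulmnE muln1.
Qed.

Section S.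
Variables p q m : nat.

Lemma homdeg0 a b : homdeg p q m a b 0.
Proof. by move=> mo; rewrite msupp0. Qed.

Lemma homdegD a b P Q : homdeg p q m a b P -> homdeg p q m a b Q ->
  homdeg p q m a b (P + Q).
Proof. by move=> hP hQ mo /msuppD_le; rewrite mem_cat => /orP[/hP|/hQ]. Qed.

Lemma homdegZ a b c P : homdeg p q m a b P -> homdeg p q m a b (c *: P).
Proof. by move=> hP mo /msuppZ_le /hP. Qed.

Lemma homdegN a b P : homdeg p q m a b P -> homdeg p q m a b (- P).
Proof. by move=> hP; rewrite -scaleN1r; apply: homdegZ. Qed.

Lemma homdegX a b mo : wZ p q mo = a -> (wM mo = b %[mod m%:Z])%Z ->
  homdeg p q m a b 'X_[mo].
Proof. by move=> h1 h2 mo'; rewrite msuppX mem_seq1 => /eqP ->. Qed.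

Lemma modsh (x y x' y' k : int) : (x = y %[mod m%:Z])%Z -> x' = x + k ->
  y' = y + k -> (x' = y' %[mod m%:Z])%Z.
Proof. by move=> h -> ->; apply/eqP; rewrite eqz_modDr; apply/eqP. Qed.

Lemma homdegMX a b a' b' e P : homdeg p q m a b P ->
  a' = a + wZ p q e -> (b + wM e = b' %[mod m%:Z])%Z ->
  homdeg p q m a' b' (P * 'X_[e]).
Proof.
move=> hP ha hb mo; rewrite (perm_mem (msuppMX _ _)) => /mapP [m' hm' ->].
have [h1 h2] := hP _ hm'; rewrite wZD wMD; split; first by rewrite ha h1 addrC.
by rewrite -hb -modzDmr h2 modzDmr addrC.
Qed.

Lemma idl0 : in_ideal p q 0.
Proof. by exists 0; rewrite mul0r. Qed.
Lemma idlD P Q : in_ideal p q P -> in_ideal p q Q -> in_ideal p q (P + Q).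
Proof. by move=> [h ->] [h' ->]; exists (h + h'); rewrite mulrDl. Qed.
Lemma idlM R P : in_ideal p q P -> in_ideal p q (R * P).
Proof. by move=> [h ->]; exists (R * h); rewrite mulrA. Qed.

Definition Span (Y1 Y2 P : R5) := exists g1 g2 : R5,
  homdeg p q m 0 0 g1 /\ homdeg p q m 0 0 g2 /\
  in_ideal p q (P - (g1 * Y1 + g2 * Y2)).

Lemma Span0 Y1 Y2 : Span Y1 Y2 0.
Proof.
exists 0, 0; split; first exact: homdeg0; split; first exact: homdeg0.
have -> : (0 : R5) - (0 * Y1 + 0 * Y2) = 0 by ring.
exact: idl0.
Qed.

Lemma SpanD Y1 Y2 P Q : Span Y1 Y2 P -> Span Y1 Y2 Q -> Span Y1 Y2 (P + Q).
Proof.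
move=> [g1 [g2 [h1 [h2 h3]]]] [g1' [g2' [h1' [h2' h3']]]].
exists (g1 + g1'), (g2 + g2'); split; first exact: homdegD.
split; first exact: homdegD.
have -> : P + Q - ((g1 + g1') * Y1 + (g2 + g2') * Y2) =
  (P - (g1 * Y1 + g2 * Y2)) + (Q - (g1' * Y1 + g2' * Y2)) by ring.
exact: idlD.
Qed.

Lemma Span_idl Y1 Y2 P : in_ideal p q P -> Span Y1 Y2 P.
Proof.
move=> h; exists 0, 0; split; first exact: homdeg0; split; first exact: homdeg0.
have -> : P - (0 * Y1 + 0 * Y2) = P by ring.
exact: h.
Qed.

Lemma Span_SG Y1 Y2 P : Span Y1 Y2 P -> in_SG_span p q m Y1 Y2 P.
Proof.
move=> [g1 [g2 [h1 [h2 h3]]]]; exists g1, g2; split.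
  exists g1; split => //; exists 0; rewrite subrr mul0r //.
split => //; exists g2; split => //; exists 0; rewrite subrr mul0r //.
Qed.

Lemma fwd Y1 Y2 a b :
  (forall mo c, wZ p q mo = a -> (wM mo = b %[mod m%:Z])%Z ->
     Span Y1 Y2 (c *: 'X_[mo])) ->
  forall P, inS p q m a b P -> Span Y1 Y2 P.
Proof.
move=> hm P [Q [hQ hPQ]].
have -> : P = Q + (P - Q) by ring.
apply: SpanD; last exact: Span_idl.
rewrite (mpolyE Q) big_seq.
apply: (big_ind (Span Y1 Y2)); [exact: Span0 | exact: SpanD |].
move=> mo hmo; have [h1 h2] := hQ mo hmo; exact: hm.
Qed.

Lemma rev a b (i j : 'I_5) P : a = 0 + wZ p q U_(i) -> a = 0 + wZ p q U_(j) ->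
  (0 + wM U_(i) = b %[mod m%:Z])%Z -> (0 + wM U_(j) = b %[mod m%:Z])%Z ->
  in_SG_span p q m 'X_i 'X_j P -> inS p q m a b P.
Proof.
move=> hi hj hmi hmj [g1 [g2 [[Q1 [hQ1 i1]] [[Q2 [hQ2 i2]] i3]]]].
exists (Q1 * 'X_i + Q2 * 'X_j); split.
  by apply: homdegD; apply: homdegMX; eauto.
have -> : P - (Q1 * 'X_i + Q2 * 'X_j) = (P - (g1 * 'X_i + g2 * 'X_j))
  + ('X_i * (g1 - Q1) + 'X_j * (g2 - Q2)) by ring.
by apply: idlD => //; apply: idlD; apply: idlM.
Qed.

Lemma mono_easy Y (i : 'I_5) mo' c :
  wZ p q mo' = 0 -> (wM mo' = 0 %[mod m%:Z])%Z ->
  Span 'X_i Y (c *: 'X_[mo' + U_(i)]) /\ Span Y 'X_i (c *: 'X_[mo' + U_(i)]).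
Proof.
move=> h1 h2.
have hd : homdeg p q m 0 0 (c *: 'X_[mo']) by apply: homdegZ; apply: homdegX.
split.
  exists (c *: 'X_[mo']), 0; split => //; split; first exact: homdeg0.
  rewrite mpolyXD -!mul_mpolyC.
  have -> : c%:MP * ('X_[mo'] * 'X_i) - (c%:MP * 'X_[mo'] * 'X_i + 0 * Y) = 0
    by ring.
  exact: idl0.
exists 0, (c *: 'X_[mo']); split; first exact: homdeg0; split => //.
rewrite mpolyXD -!mul_mpolyC.
have -> : c%:MP * ('X_[mo'] * 'X_i) - (0 * Y + c%:MP * 'X_[mo'] * 'X_i) = 0
  by ring.
exact: idl0.
Qed.

End S.

Lemma wZU p q k : (k < 5)%N -> wZ p q U_(inord k) =
  if k == 0%N then 1 else if (k == 1%N) || (k == 2%N) then - p%:Z else q%:Z.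
Proof.
move=> hk; rewrite /wZ !mnm1E !ieq //.
by case: k hk => [|[|[|[|[|]]]]] //= _; lia.
Qed.

Lemma wMU k : (k < 5)%N -> wM U_(inord k) =
  if k == 0%N then 0 else if (k == 1%N) || (k == 2%N) then -1 else 1.
Proof.
move=> hk; rewrite /wM !mnm1E !ieq //.
by case: k hk => [|[|[|[|[|]]]]] //= _; lia.
Qed.

Lemma wZUk p q k : wZ p q (U_(inord 0) *+ k)%MM = k%:Z.
Proof. rewrite /wZ !mulmnE !mnm1E !ieq //=; lia. Qed.
Lemma wMUk k : wM (U_(inord 0) *+ k)%MM = 0.
Proof. rewrite /wM !mulmnE !mnm1E !ieq //=; lia. Qed.

Theorem lemma4p4 (p q m : nat) :
  (0 < p)%N -> (0 < q)%N -> coprime p q -> (p <= q)%N -> (0 < m)%N ->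
  (forall P : R5, inS p q m (- p%:Z) (-1) P <-> in_SG_span p q m X1 X2 P) /\
  (forall P : R5, inS p q m q%:Z 1 P <-> in_SG_span p q m X3 X4 P).
Proof.
move=> hp hq cop hpq hm; split => P; split.
- move=> hP; apply: Span_SG; move: P hP; apply: fwd => mo c h1 h2.
  have [h0|h0] : (0 < mo (inord 1))%N \/ (0 < mo (inord 2))%N.
    by move: h1; rewrite /wZ; nia.
  + have [mo' E] := mfact1 _ _ h0.
    move: h1 h2; rewrite E wZD wMD wZU // wMU // /= => h1 h2.
    rewrite /X1 /X2; apply: (mono_easy p q m _ _ _ c _ _).1.
      by move: h1; lia.
    by apply: (@modsh m _ _ _ _ 1 h2) => //; rewrite addrK.
  + have [mo' E] := mfact1 _ _ h0.
    move: h1 h2; rewrite E wZD wMD wZU // wMU // /= => h1 h2.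
    rewrite /X1 /X2; apply: (mono_easy p q m _ _ _ c _ _).2.
      by move: h1; lia.
    by apply: (@modsh m _ _ _ _ 1 h2) => //; rewrite addrK.
- move=> h; apply: (rev p q m _ _ (inord 1) (inord 2)); rewrite ?wZU ?wMU //= ?add0r //.
- move=> hP; apply: Span_SG; move: P hP; apply: fwd => mo c h1 h2.
  case: (posnP (mo (inord 3))) => h3; last first.
    have [mo' E] := mfact1 _ _ h3.
    move: h1 h2; rewrite E wZD wMD wZU // wMU // /= => h1 h2.
    rewrite /X3 /X4; apply: (mono_easy p q m _ _ _ c _ _).1.
      by move: h1; lia.
    by apply: (@modsh m _ _ _ _ (-1) h2) => //; rewrite addrK.
  case: (posnP (mo (inord 4))) => h4; last first.
    have [mo' E] := mfact1 _ _ h4.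
    move: h1 h2; rewrite E wZD wMD wZU // wMU // /= => h1 h2.
    rewrite /X3 /X4; apply: (mono_easy p q m _ _ _ c _ _).2.
      by move: h1; lia.
    by apply: (@modsh m _ _ _ _ (-1) h2) => //; rewrite addrK.
  have hk : (q - p <= mo (inord 0))%N by move: h1; rewrite /wZ h3 h4; nia.
  have [mo' E] := mfact _ _ _ hk.
  move: h1 h2; rewrite E wZD wMD wZUk wMUk => h1 h2.
  have h2' : (wM mo' = 1 %[mod m%:Z])%Z by move: h2; rewrite addr0.
  exists (- (c *: 'X_[mo' + U_(inord 2)])), (c *: 'X_[mo' + U_(inord 1)]).
  split.
    apply: homdegN; apply: homdegZ; apply: homdegX.
      by rewrite wZD wZU //=; move: h1; lia.
    by apply: (@modsh m _ _ _ _ (-1) h2') => //; rewrite wMD wMU.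
  split.
    apply: homdegZ; apply: homdegX.
      by rewrite wZD wZU //=; move: h1; lia.
    by apply: (@modsh m _ _ _ _ (-1) h2') => //; rewrite wMD wMU.
  rewrite !mpolyXD -mpolyXn -!mul_mpolyC.
  exists (c%:MP * 'X_[mo']); rewrite /Defs.frel /X0 /X1 /X2 /X3 /X4; ring.
- move=> h; apply: (rev p q m _ _ (inord 3) (inord 4)); rewrite ?wZU ?wMU //= ?add0r //.
Qed.
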